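(* Let $m\ge2$ be an integer and $j\in\{1,\dots,m-1\}$. The ideal $\langle X^m,X^{m-j}Y^j,Y^m\rangle$ of $R$ is an atom of $\mathcal I(R)$ if and only if $m\neq 2j$.
   Context: Let $D$ be an integral domain, $N\ge2$, $R=D[X_1,\dots,X_N]$, $X=X_1$, $Y=X_2$. $\mathcal I(R)$ denotes the monoid of nonzero ideals of $R$ under ideal multiplication (identity $R$, whose only unit is $R$). Standing assumption: $\mathcal I(R)$ is a BF-monoid. An atom of $\mathcal I(R)$ is an ideal $I\in\mathcal I(R)$, $I\ne R$, such that $I=\mathfrak a\mathfrak b$ with $\mathfrak a,\mathfrak b\in\mathcal I(R)$ forces $\mathfrak a=R$ or $\mathfrak b=R$. *)

(* Defs.v *)
From HB Require Import structures.
From mathcomp Require Import all_boot all_algebra.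
From mathcomp Require Import mpoly.
Set Implicit Arguments. Unset Strict Implicit. Unset Printing Implicit Defensive.
Import GRing.Theory.
Local Open Scope ring_scope.

Section Ideals.
Variable R : comNzRingType.

Definition subsetR := R -> Prop.

Definition is_ideal (I : subsetR) : Prop :=
  [/\ I 0, (forall x y, I x -> I y -> I (x + y)) & (forall r x, I x -> I (r * x))].

(* elements of the monoid I(R): nonzero ideals *)
Definition nonzero_ideal (I : subsetR) : Prop :=
  is_ideal I /\ exists x, I x /\ x != 0.

Definition unit_ideal : subsetR := fun _ => True.

Definition ideal_eq (I J : subsetR) : Prop := forall x, I x <-> J x.

Definition ideal_mul (I J : subsetR) : subsetR := fun x =>
  exists n (a b : 'I_n -> R),
    [/\ forall i, I (a i), forall i, J (b i) & x = \sum_(i < n) a i * b i].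

Definition ideal_prod (s : seq subsetR) : subsetR := foldr ideal_mul unit_ideal s.

Definition gen_ideal (g : seq R) : subsetR := fun x =>
  exists c : 'I_(size g) -> R, x = \sum_(i < size g) c i * g`_i.

Definition ideal_atom (I : subsetR) : Prop :=
  [/\ nonzero_ideal I, ~ ideal_eq I unit_ideal &
      forall A B, nonzero_ideal A -> nonzero_ideal B ->
        ideal_eq I (ideal_mul A B) -> ideal_eq A unit_ideal \/ ideal_eq B unit_ideal].

Definition all_atoms (s : seq subsetR) : Prop := forall i, (i < size s)%N -> ideal_atom (nth unit_ideal s i).

Definition ideal_monoid_BF : Prop :=
  forall I, nonzero_ideal I -> ~ ideal_eq I unit_ideal ->
    (exists s, all_atoms s /\ ideal_eq I (ideal_prod s)) /\
    (exists n, forall s, all_atoms s -> ideal_eq I (ideal_prod s) -> (size s <= n)%N).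

End Ideals.

(* the variables X = X_1 and Y = X_2 of D[X_1,...,X_N], N >= 2 (0-indexed) *)
Definition var1 (N : nat) (hN : (1 < N)%N) : 'I_N := Ordinal (ltnW hN).
Definition var2 (N : nat) (hN : (1 < N)%N) : 'I_N := Ordinal hN.

(* Main.v *)
Require Import Defs.
From HB Require Import structures.
From mathcomp Require Import all_boot all_algebra.
From mathcomp Require Import mpoly.
From mathcomp Require Import zify ring.
From Stdlib Require Import Classical.
Set Implicit Arguments. Unset Strict Implicit. Unset Printing Implicit Defensive.
Import GRing.Theory.
Local Open Scope ring_scope.

Definition wvar (n : nat) (i : 'I_n) (m : 'X_{1..n}) : nat := m i.
Lemma wvar0 n i : @wvar n i 0%MM = 0%N. Proof. by rewrite /wvar mnm0E. Qed.
Lemma wvarD n i : {morph @wvar n i : m1 m2 / (m1 + m2)%MM >-> (m1 + m2)%N}.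
Proof. by move=> m1 m2; rewrite /wvar mnmDE. Qed.
HB.instance Definition _ n i := isMeasure.Build n (@wvar n i) (@wvar0 n i) (@wvarD n i).

Section Gen.
Context (n : nat) (R : idomainType) (w : measure n).
Implicit Types (p q : {mpoly R[n]}).

Lemma pihomog_coef d p mu : (pihomog w d p)@_mu = if w mu == d then p@_mu else 0.
Proof.
rewrite (@pihomogwE n R w d (maxn (msize p) (mdeg mu).+1) p) ?leq_maxl //.
rewrite big_mkcond /=.
rewrite (eq_bigr (fun m : 'X_{1..n < maxn (msize p) (mdeg mu).+1} => (if w m == d then p@_m else 0) *: 'X_[m])); last first.
  by move=> m _; case: ifP => //; rewrite scale0r.
by rewrite (@mcoeff_mpoly n R (fun m => if w m == d then p@_m else 0)) // leq_maxr.
Qed.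

Lemma pihomogZX d (c : R) m : pihomog w d (c *: 'X_[m] : {mpoly R[n]}) = if w m == d then c *: 'X_[m] else 0.
Proof. by rewrite linearZ /= pihomogX; case: ifP => _; rewrite ?scaler0. Qed.

Lemma pihomogM_gen p q dp dq :
  (forall m1 m2, m1 \in msupp p -> m2 \in msupp q ->
     (w m1 + w m2 = dp + dq)%N -> w m1 = dp /\ w m2 = dq) ->
  pihomog w (dp + dq) (p * q) = pihomog w dp p * pihomog w dq q.
Proof.
move=> H.
have Lp : forall (d : nat) (r : {mpoly R[n]}), pihomog w d r = \sum_(m1 <- msupp r) pihomog w d (r@_m1 *: 'X_[m1]).
  by move=> d r; rewrite {1}(mpolyE r) linear_sum.
rewrite (Lp dp p) (Lp dq q) mulr_suml.
have -> : p * q = \sum_(m1 <- msupp p) \sum_(m2 <- msupp q) (p@_m1 *: 'X_[m1]) * (q@_m2 *: 'X_[m2]).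
  rewrite {1}[p]mpolyE {1}[q]mpolyE mulr_suml; apply: eq_bigr => m1 _.
  by rewrite mulr_sumr.
rewrite linear_sum /=.
rewrite big_seq [RHS]big_seq; apply: eq_bigr => m1 h1.
rewrite linear_sum /= mulr_sumr.
rewrite big_seq [RHS]big_seq; apply: eq_bigr => m2 h2.
rewrite -scalerAl -scalerAr scalerA -mpolyXD !pihomogZX mfD.
have [e|ne] := eqVneq (w m1 + w m2)%N (dp + dq)%N.
  have [-> ->] := H _ _ h1 h2 e.
  by rewrite !eqxx -scalerAl -scalerAr scalerA -mpolyXD.
case: (eqVneq (w m1) dp) => [e1|]; last by rewrite mul0r.
case: (eqVneq (w m2) dq) => [e2|]; last by rewrite mulr0.
by move: ne; rewrite e1 e2 eqxx.
Qed.

Lemma pihomog_neq0P d p : pihomog w d p != 0 -> exists2 m, m \in msupp p & w m = d.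
Proof.
move=> hp.
case: (boolP (has (fun m => w m == d) (msupp p))) => [/hasP [m hm /eqP e]|hn].
  by exists m.
exfalso; move/eqP: hp; apply; apply/mpolyP => m.
rewrite pihomog_coef mcoeff0; case: eqP => // e.
apply: memN_msupp_eq0; apply: contra hn => hm; apply/hasP; exists m => //; exact/eqP.
Qed.

Lemma pihomog_neq0 d p m : m \in msupp p -> w m = d -> pihomog w d p != 0.
Proof.
move=> hm e; apply/eqP => h; move: hm; rewrite mcoeff_msupp.
by have := pihomog_coef d p m; rewrite h mcoeff0 e eqxx => <-; rewrite eqxx.
Qed.

Lemma exists_maxw p : p != 0 ->
  exists e, (forall m, m \in msupp p -> (w m <= e)%N) /\ pihomog w e p != 0.
Proof.
move=> pn0.
have ex : exists k, has (fun m => w m == k) (msupp p).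
  have [m hm] : exists m, m \in msupp p.
    by case E: (msupp p) => [|m s]; [move: pn0; rewrite -msupp_eq0 E | exists m; rewrite inE eqxx].
  by exists (w m); apply/hasP; exists m.
have bnd : forall k, has (fun m => w m == k) (msupp p) -> (k <= \sum_(m <- msupp p) w m)%N.
  move=> k /hasP [m hm /eqP <-]; rewrite (big_rem m) //=; exact: leq_addr.
case: (ex_maxnP ex bnd) => e /hasP [m hm /eqP em] he.
exists e; split; last exact: (pihomog_neq0 hm em).
move=> m' hm'; apply: he; apply/hasP; exists m' => //.
Qed.


Lemma pihomog_supp d p mu : mu \in msupp (pihomog w d p) -> w mu = d /\ mu \in msupp p.
Proof.
rewrite mcoeff_msupp pihomog_coef; case: (eqVneq (w mu) d) => [e h|_]; last by rewrite eqxx.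
by split; rewrite // mcoeff_msupp.
Qed.
End Gen.

Section IdealGen.
Context (R : comNzRingType).
Implicit Types (A B I : subsetR R).

Lemma ideal_sub A x y : is_ideal A -> A x -> A y -> A (x - y).
Proof.
move=> [h0 hD hM] hx hy; apply: hD => //.
by rewrite -mulN1r; apply: hM.
Qed.

Lemma ideal_mulr A r x : is_ideal A -> A x -> A (x * r).
Proof. by move=> [_ _ hM] hx; rewrite mulrC; apply: hM. Qed.

Lemma ideal_sum A (I : Type) (s : seq I) (P : pred I) (F : I -> R) :
  is_ideal A -> (forall i, P i -> A (F i)) -> A (\sum_(i <- s | P i) F i).
Proof.
move=> [h0 hD hM] hF; elim/big_ind: _ => //.
Qed.

Lemma gen_ideal_is_ideal (g : seq R) : is_ideal (gen_ideal g).
Proof.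
split.
- by exists (fun _ => 0); rewrite big1 // => i _; rewrite mul0r.
- move=> x y [c ->] [d ->]; exists (fun i => c i + d i).
  by rewrite -big_split /=; apply: eq_bigr => i _; rewrite mulrDl.
- move=> r x [c ->]; exists (fun i => r * c i).
  by rewrite mulr_sumr; apply: eq_bigr => i _; rewrite mulrA.
Qed.

Lemma gen_ideal_gen (g : seq R) (i : 'I_(size g)) : gen_ideal g g`_i.
Proof.
exists (fun k => (k == i)%:R); rewrite (bigD1 i) //= eqxx mul1r big1 ?addr0 //.
by move=> k /negbTE ->; rewrite mul0r.
Qed.

Lemma ideal_mul_prod A B a b : A a -> B b -> ideal_mul A B (a * b).
Proof.
move=> ha hb; exists 1%N, (fun _ => a), (fun _ => b); split => //.
by rewrite big_ord1.
Qed.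

Lemma ideal_mulC A B : ideal_eq (ideal_mul A B) (ideal_mul B A).
Proof.
by move=> x; split => -[k [a [b [ha hb ->]]]]; exists k, b, a; split => //;
  apply: eq_bigr => i _; rewrite mulrC.
Qed.

Lemma ideal_unitP A : is_ideal A -> A 1 -> ideal_eq A (@unit_ideal R).
Proof.
move=> [_ _ hM] h1 x; split => // _; by rewrite -[x]mulr1; apply: hM.
Qed.

End IdealGen.

Section MonoGen.
Context (n : nat).
Lemma mulmn1E (i k : 'I_n) e : ((U_(i) *+ e)%MM k = if i == k then e else 0)%N.
Proof. by rewrite mulmnE mnm1E; case: eqP => _; rewrite ?mul1n ?mul0n. Qed.

Lemma mdeg_ge1 (mu : 'X_{1..n}) (i : 'I_n) : (mu i <= mdeg mu)%N.
Proof. by rewrite mdegE (bigD1 i) //= leq_addr. Qed.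

Lemma mdeg_eq1 (mu : 'X_{1..n}) (i : 'I_n) : mu i = mdeg mu -> mu = (U_(i) *+ mdeg mu)%MM.
Proof.
move=> e; apply/mnmP => k; rewrite mulmn1E.
case: eqP => [<-|ne] //.
have : (mu i + mu k <= mdeg mu)%N.
  rewrite mdegE (bigD1 i) //= (bigD1 k) /=; last by apply/eqP => h; apply: ne.
  by rewrite addnA leq_addr.
rewrite e; lia.
Qed.

End MonoGen.

Section Mono.
Context (n : nat) (D : idomainType) (x y : 'I_n) (m j : nat).
Hypothesis xy : x != y.

Lemma xyF : (x == y) = false. Proof. exact: negbTE. Qed.
Lemma yxF : (y == x) = false. Proof. by rewrite eq_sym xyF. Qed.

Definition Smon (mu : 'X_{1..n}) : bool :=
  [|| (m <= mu x)%N, ((m - j <= mu x) && (j <= mu y))%N | (m <= mu y)%N].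

Definition gens : seq {mpoly D[n]} :=
  [:: 'X_x ^+ m; 'X_x ^+ (m - j) * 'X_y ^+ j; 'X_y ^+ m].

Lemma gensE : gens = [:: 'X_[U_(x) *+ m]; 'X_[U_(x) *+ (m - j) + U_(y) *+ j]; 'X_[U_(y) *+ m]].
Proof. by rewrite /gens !mpolyXn mpolyXD. Qed.

Lemma msuppMX_le (c : {mpoly D[n]}) nu mu : mu \in msupp (c * 'X_[nu]) -> (nu <= mu)%MM.
Proof.
rewrite (perm_mem (msuppMX c nu)) => /mapP [m' _ ->]; exact: lem_addr.
Qed.

Lemma Smon_mono mu mu' : (mu <= mu')%MM -> Smon mu -> Smon mu'.
Proof.
move=> /mnm_lepP h; rewrite /Smon => /or3P [h1|/andP [h1 h2]|h1]; apply/or3P.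
- by constructor 1; apply: leq_trans h1 (h x).
- by constructor 2; rewrite (leq_trans h1 (h x)) (leq_trans h2 (h y)).
- by constructor 3; apply: leq_trans h1 (h y).
Qed.

Lemma memI (f : {mpoly D[n]}) :
  gen_ideal gens f <-> (forall mu, mu \in msupp f -> Smon mu).
Proof.
split.
- have g0 : gens`_0 = 'X_[U_(x) *+ m] by rewrite gensE.
  have g1 : gens`_1 = 'X_[U_(x) *+ (m - j) + U_(y) *+ j] by rewrite gensE.
  have g2 : gens`_2 = 'X_[U_(y) *+ m] by rewrite gensE.
  case=> c ->{f} mu; rewrite !big_ord_recl big_ord0 addr0 /=.
  rewrite !mpolyXn -mpolyXD.
  move=> /msuppD_le; rewrite mem_cat => /orP [/msuppMX_le h|].
    by apply: Smon_mono h _; rewrite /Smon mulmn1E eqxx leqnn.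
  move=> /msuppD_le; rewrite mem_cat => /orP [/msuppMX_le /mnm_lepP h|/msuppMX_le /mnm_lepP h].
    apply/or3P; constructor 2; apply/andP; split.
      by have := h x; rewrite mnmDE !mulmn1E eqxx yxF; lia.
    have := h y; rewrite mnmDE !mulmn1E eqxx xyF; lia.
  apply/or3P; constructor 3; have := h y; rewrite mulmn1E eqxx; lia.
- move=> hS; rewrite [f]mpolyE big_seq; apply: ideal_sum; first exact: gen_ideal_is_ideal.
  move=> mu /hS hmu; rewrite -mul_mpolyC.
  have [_ _ hM] := gen_ideal_is_ideal gens; apply: (hM).
  have hX : forall nu (i : nat) (hi : (i < size gens)%N), gens`_i = 'X_[nu] -> (nu <= mu)%MM ->
      gen_ideal gens 'X_[mu].
    move=> nu i hi he hle; rewrite -(submK hle) mpolyXD -he; apply: (hM).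
    exact: (gen_ideal_gen (Ordinal hi)).
  move: hmu; rewrite /Smon => /or3P [h1|/andP [h1 h2]|h1].
  + apply: (hX _ 0%N isT); first by rewrite gensE.
    by apply/mnm_lepP => i; rewrite mulmn1E; case: eqP => [<-|] //.
  + apply: (hX _ 1%N isT); first by rewrite gensE.
    apply/mnm_lepP => i; rewrite mnmDE !mulmn1E.
    case: eqP => [<-|_]; first by rewrite yxF addn0.
    by case: eqP => [<-|_].
  + apply: (hX _ 2%N isT); first by rewrite gensE.
    by apply/mnm_lepP => i; rewrite mulmn1E; case: eqP => [<-|] //.
Qed.

Lemma mdeg_ge2 (mu : 'X_{1..n}) : (mu x + mu y <= mdeg mu)%N.
Proof.
rewrite mdegE (bigD1 x) //= (bigD1 y) /=; last by rewrite eq_sym xy.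
by rewrite addnA leq_addr.
Qed.

Hypothesis jm : (j <= m)%N.

Lemma Smon_deg mu : Smon mu -> (m <= mdeg mu)%N.
Proof.
have := mdeg_ge2 mu; rewrite /Smon => h /or3P [h1|/andP [h1 h2]|h1]; lia.
Qed.

Lemma Smon_degm_x mu : Smon mu -> mdeg mu = m -> [|| mu x == m, mu x == (m - j)%N | mu x == 0%N].
Proof.
have := mdeg_ge2 mu; rewrite /Smon => h /or3P [h1|/andP [h1 h2]|h1] e; apply/or3P.
- by constructor 1; apply/eqP; lia.
- by constructor 2; apply/eqP; lia.
- by constructor 3; apply/eqP; lia.
Qed.

Lemma Smon_degm_y mu : Smon mu -> mdeg mu = m -> [|| mu y == m, mu y == j | mu y == 0%N].
Proof.
have := mdeg_ge2 mu; rewrite /Smon => h /or3P [h1|/andP [h1 h2]|h1] e; apply/or3P.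
- by constructor 3; apply/eqP; lia.
- by constructor 2; apply/eqP; lia.
- by constructor 1; apply/eqP; lia.
Qed.
End Mono.

Definition decomp (n : nat) (D : idomainType) (PA PB : {mpoly D[n]} -> Prop) (Z : {mpoly D[n]}) :=
  exists l (Fs Gs : 'I_l -> {mpoly D[n]}),
    [/\ forall i, PA (Fs i), forall i, PB (Gs i) & Z = \sum_(i < l) Fs i * Gs i].

Section Core.
Context (n : nat) (D : idomainType) (x : 'I_n) (a b k : nat)
  (PA PB : {mpoly D[n]} -> Prop).
Hypotheses (ha : (1 <= a)%N) (hb : (1 <= b)%N).
Hypothesis hPAlin : forall F F0 (c d : D), PA F -> PA F0 -> PA (c *: F - d *: F0).
Hypothesis hPAh : forall F, PA F -> forall mu, mu \in msupp F -> mdeg mu = a.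
Hypothesis hPBh : forall G, PB G -> forall mu, mu \in msupp G -> mdeg mu = b.
Hypothesis hprod : forall F G, PA F -> PB G -> forall mu, mu \in msupp (F * G) ->
  [|| mu x == (a + b)%N, mu x == k | mu x == 0%N].
Hypothesis hdecX : decomp PA PB ('X_x ^+ (a + b)).
Hypothesis hdecZ : exists2 Z, Z != 0 /\ (forall mu, mu \in msupp Z -> mu x = 0%N) & decomp PA PB Z.

Local Notation w := (wvar x).

Lemma wA F : PA F -> forall mu, mu \in msupp F -> (w mu <= a)%N.
Proof. by move=> hF mu hmu; rewrite /wvar -(hPAh hF hmu) mdeg_ge1. Qed.
Lemma wB G : PB G -> forall mu, mu \in msupp G -> (w mu <= b)%N.
Proof. by move=> hG mu hmu; rewrite /wvar -(hPBh hG hmu) mdeg_ge1. Qed.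

Lemma topM (p q : {mpoly D[n]}) dp dq :
  (forall mu, mu \in msupp p -> (w mu <= dp)%N) ->
  (forall mu, mu \in msupp q -> (w mu <= dq)%N) ->
  pihomog w dp p != 0 -> pihomog w dq q != 0 ->
  exists2 mu, mu \in msupp (p * q) & w mu = (dp + dq)%N.
Proof.
move=> hp hq np nq; apply: pihomog_neq0P.
rewrite pihomogM_gen ?mulf_neq0 //.
move=> m1 m2 h1 h2 e; have h3 := hp _ h1; have h4 := hq _ h2.
have e1 : (m1 x + m2 x = dp + dq)%N := e.
rewrite /wvar in h3 h4; change (m1 x = dp /\ m2 x = dq); lia.
Qed.

Lemma coefXm (c : {mpoly D[n]}) : (c * 'X_[U_(x) *+ (a + b)])@_(U_(x) *+ (a + b)) = c@_0.
Proof. by rewrite -{1}[(U_(x) *+ (a + b))%MM]addm0 mcoeffMX. Qed.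

Lemma core : (b <= k)%N.
Proof.
set ux := (U_(x) *+ a)%MM.
have [l [Fs [Gs [hF hG hsum]]]] := hdecX.
have [i0 hi0] : exists i, (Fs i * Gs i)@_(U_(x) *+ (a + b)) != 0.
  apply: NNPP => hn.
  have := congr1 (mcoeff (U_(x) *+ (a + b))) hsum.
  rewrite raddf_sum big1.
    rewrite mpolyXn mcoeffX eqxx => /eqP.
    by rewrite oner_eq0.
  move=> i _; case: (eqVneq ((Fs i * Gs i)@_(U_(x) *+ (a + b))) 0) => // hi.
  by exfalso; apply: hn; exists i.
set F0 := Fs i0; set G0 := Gs i0.
have hF0 := hF i0; have hG0 := hG i0.
have hmu : (U_(x) *+ (a + b))%MM \in msupp (F0 * G0) by rewrite mcoeff_msupp.
have hpi : pihomog w (a + b) (F0 * G0) != 0.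
  apply: (pihomog_neq0 hmu); by rewrite /= /wvar mulmn1E eqxx.
rewrite pihomogM_gen in hpi; last first.
  move=> m1 m2 h1 h2 e; have h3 := wA hF0 h1; have h4 := wB hG0 h2.
  have e1 : (m1 x + m2 x = a + b)%N := e.
  rewrite /wvar in h3 h4; change (m1 x = a /\ m2 x = b); lia.
have nF0 : pihomog w a F0 != 0 by apply: contraNneq hpi => ->; rewrite mul0r.
have nG0 : pihomog w b G0 != 0 by apply: contraNneq hpi => ->; rewrite mulr0.
have c0n : F0@_ux != 0.
  have [mu hmu1 e] := pihomog_neq0P nF0.
  have e1 : mu x = a := e.
  have := mdeg_eq1 (etrans e1 (esym (hPAh hF0 hmu1))).
  by rewrite (hPAh hF0 hmu1) -/ux => <-; rewrite -mcoeff_msupp.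
set c0 := F0@_ux.
have wAlt : forall F, PA F -> F@_ux = 0 -> forall mu, mu \in msupp F -> (w mu <= a.-1)%N.
  move=> F hF1 hc mu hmu1; have := wA hF1 hmu1.
  rewrite leq_eqVlt => /orP [/eqP e|]; last by case: (a) ha => //= a' _ /ltnSE.
  have hd := hPAh hF1 hmu1.
  have e1 : mu x = mdeg mu by rewrite hd; exact: e.
  move: hmu1; rewrite (mdeg_eq1 e1) hd -/ux mcoeff_msupp hc.
  by rewrite eqxx.
case: (classic (exists2 F, PA F & c0 *: F - F@_ux *: F0 != 0)) => [[F hF1 hnz]|hno].
- set F' := c0 *: F - F@_ux *: F0 in hnz.
  have hF' : PA F' by apply: hPAlin.
  have hc' : F'@_ux = 0 by rewrite mcoeffB !mcoeffZ mulrC subrr.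
  have [e [he hpe]] := exists_maxw (wvar x) hnz.
  have [mu hmu1 emu] := pihomog_neq0P hpe.
  have ea : (e <= a.-1)%N by rewrite -emu; exact: (wAlt _ hF' hc' _ hmu1).
  have [nu hnu enu] := topM he (wB hG0) hpe nG0.
  have enu' : nu x = (e + b)%N := enu.
  have := hprod hF' hG0 hnu; rewrite enu'.
  move: ha hb ea; case: (a) => // a' _ hb' ea.
  move=> /or3P [/eqP h|/eqP h|/eqP h]; lia.
- have hall : forall F, PA F -> c0 *: F = F@_ux *: F0.
    move=> F hF1; apply/eqP; rewrite -subr_eq0; apply/negPn/negP => hn.
    by apply: hno; exists F.
  have [Z [Zn0 hZ0] [l' [Hs [Ks [hH hK hZ]]]]] := hdecZ.
  set H := \sum_(i < l') (Hs i)@_ux *: Ks i.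
  have eZ : c0 *: Z = F0 * H.
    rewrite hZ scaler_sumr mulr_sumr; apply: eq_bigr => i _.
    by rewrite scalerAl hall // -scalerAl -scalerAr.
  have nZ : c0 *: Z != 0 by rewrite mscalerI negb_or c0n.
  have Hn0 : H != 0 by apply: contraNneq nZ => hH0; rewrite eZ hH0 mulr0.
  have [e [he hpe]] := exists_maxw (wvar x) Hn0.
  have [nu hnu enu] := topM (wA hF0) he nF0 hpe.
  have enu' : nu x = (a + e)%N := enu.
  rewrite -eZ in hnu; have := hZ0 _ (msuppZ_le hnu); rewrite enu'; lia.
Qed.
End Core.

Lemma detrick (R : comNzRingType) (A : subsetR R) (g0 g1 g2 : R) :
  (forall a b : R, a * b = 0 -> a = 0 \/ b = 0) ->
  is_ideal A -> g0 != 0 ->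
  (forall g, g \in [:: g0; g1; g2] -> exists M0 M1 M2, [/\ A M0, A M1, A M2 &
      g = M0 * g0 + M1 * g1 + M2 * g2]) -> A 1.
Proof.
move=> hdom hA g0n hT.
have [M00 [M01 [M02 [h00 h01 h02 e0]]]] := hT g0 (mem_head _ _).
have [M10 [M11 [M12 [h10 h11 h12 e1]]]] := hT g1 ltac:(by rewrite !inE eqxx orbT).
have [M20 [M21 [M22 [h20 h21 h22 e2]]]] := hT g2 ltac:(by rewrite !inE eqxx !orbT).
set a00 := 1 - M00; set a01 := - M01; set a02 := - M02.
set a10 := - M10; set a11 := 1 - M11; set a12 := - M12.
set a20 := - M20; set a21 := - M21; set a22 := 1 - M22.
set d := a00 * (a11 * a22 - a12 * a21) - a01 * (a10 * a22 - a12 * a20)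
         + a02 * (a10 * a21 - a11 * a20).
have hd : d * g0 = (a11 * a22 - a12 * a21) * (g0 - (M00 * g0 + M01 * g1 + M02 * g2))
   - (a01 * a22 - a02 * a21) * (g1 - (M10 * g0 + M11 * g1 + M12 * g2))
   + (a01 * a12 - a02 * a11) * (g2 - (M20 * g0 + M21 * g1 + M22 * g2)).
  rewrite /d /a00 /a01 /a02 /a10 /a11 /a12 /a20 /a21 /a22; ring.
rewrite -e0 -e1 -e2 !subrr !mulr0 subrr addr0 in hd.
have d0 : d = 0 by case: (hdom _ _ hd) => // h; move: g0n; rewrite h eqxx.
have e : 1 = M00 * (1 - M11 - M22 + M11 * M22 - M12 * M21)
  + M01 * (M10 - M10 * M22 + M12 * M20)
  + M02 * (M20 + M10 * M21 - M11 * M20)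
  + M11 * (1 - M22) + M12 * M21 + M22.
  rewrite -[LHS]subr0 -d0 /d /a00 /a01 /a02 /a10 /a11 /a12 /a20 /a21 /a22; ring.
have [_ hD _] := hA.
rewrite e; repeat apply: (hD).
all: first [ assumption | apply: ideal_mulr; [exact: hA | assumption]].
Qed.

Lemma gen_ideal_nth (R : comNzRingType) (g : seq R) i : (i < size g)%N -> gen_ideal g g`_i.
Proof. by move=> hi; exact: (gen_ideal_gen (Ordinal hi)). Qed.

Section Zero.
Context (n : nat) (D : idomainType) (x y : 'I_n) (m j : nat).
Hypothesis xy : x != y.
Hypothesis jm : (j <= m)%N.
Hypothesis j1 : (1 <= j)%N.

Local Notation I := (gen_ideal (gens D x y m j)).
Local Notation Smon := (Smon x y m j).

Lemma coefXf nu (f : {mpoly D[n]}) mu :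
  ('X_[nu] * f)@_mu = if (nu <= mu)%MM then f@_(mu - nu) else 0.
Proof.
case: ifP => h.
  by rewrite -{1}(submK h) addmC mulrC mcoeffMX.
apply: memN_msupp_eq0; apply: contraFN h; rewrite mulrC; exact: msuppMX_le.
Qed.

Lemma coefM_X (u f : {mpoly D[n]}) mu :
  (u * f)@_mu = \sum_(nu <- msupp u) u@_nu * (('X_[nu] * f)@_mu).
Proof.
rewrite {1}[u]mpolyE mulr_suml raddf_sum; apply: eq_bigr => nu _.
by rewrite -scalerAl; apply: mcoeffZ.
Qed.

Lemma zero_case (A B : subsetR {mpoly D[n]}) :
  is_ideal A -> is_ideal B -> ideal_eq I (ideal_mul A B) ->
  (exists2 u, A u & u@_0%MM != 0) -> ideal_eq A (@unit_ideal _).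
Proof.
move=> hA hB hI [u hu u0].
have BI : forall f, B f -> I f.
  move=> f hf; apply/(memI m j xy) => mu hmu; apply: negbNE; apply/negP => hS.
  move: hmu; rewrite mcoeff_msupp => /negP; apply.
  have key : forall d nu, (mdeg nu < d)%N -> ~~ Smon nu -> f@_nu = 0.
    elim=> [//|d IH] nu hnu hSn.
    have huf : I (u * f) by apply/hI; exact: ideal_mul_prod.
    have : (u * f)@_nu = 0.
      apply: memN_msupp_eq0; apply: contra hSn => h.
      by have := (proj1 (memI m j xy (u * f))) huf nu h.
    rewrite coefM_X (bigD1_seq 0%MM) //=; last by rewrite mcoeff_msupp.
    rewrite big_seq_cond big1 ?addr0.
      rewrite mpolyX0 mul1r => /eqP; rewrite mulf_eq0 (negbTE u0) /=; exact/eqP.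
    move=> nu' /andP [hnu' ne]; rewrite coefXf; case: ifP => hle; last by rewrite mulr0.
    rewrite IH ?mulr0 //.
      have := mdegD (nu - nu') nu'; rewrite submK // => e.
      have : (0 < mdeg nu')%N by rewrite lt0n mdeg_eq0.
      move: hnu; rewrite e; lia.
    apply: contra hSn => h; apply: Smon_mono h; exact: lem_subr.
  by apply/eqP; apply: (key (mdeg mu).+1 mu (ltnSn _) hS).
apply: ideal_unitP => //.
set g0 : {mpoly D[n]} := 'X_x ^+ m.
set g1 : {mpoly D[n]} := 'X_x ^+ (m - j) * 'X_y ^+ j.
set g2 : {mpoly D[n]} := 'X_y ^+ m.
have [hA0 hAD hAM] := hA.
apply: (@detrick _ A g0 g1 g2) => //.
- by move=> a b /eqP; rewrite mulf_eq0 => /orP [/eqP ->|/eqP ->]; [left|right].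
- by rewrite /g0 mpolyXn -msupp_eq0 msuppX.
set T := fun z : {mpoly D[n]} => exists M0 M1 M2, [/\ A M0, A M1, A M2 &
      z = M0 * g0 + M1 * g1 + M2 * g2].
have T0 : T 0 by exists 0, 0, 0; split => //; rewrite !mul0r !addr0.
have TD : forall z z', T z -> T z' -> T (z + z').
  move=> z z' [M0 [M1 [M2 [h0 h1 h2 ->]]]] [N0 [N1 [N2 [k0 k1 k2 ->]]]].
  exists (M0 + N0), (M1 + N1), (M2 + N2); split; try exact: hAD.
  rewrite !mulrDl; ring.
have TM : forall a b, A a -> I b -> T (a * b).
  move=> a b ha [c ->]; rewrite !big_ord_recl big_ord0 addr0 /=.
  exists (a * c ord0), (a * c (lift ord0 ord0)), (a * c (lift ord0 (lift ord0 ord0))).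
  split; try exact: ideal_mulr.
  rewrite /g0 /g1 /g2; ring.
move=> g hg.
have : I g.
  move: hg; rewrite !inE => /or3P [/eqP ->|/eqP ->|/eqP ->].
  - exact: (@gen_ideal_nth _ (gens D x y m j) 0%N isT).
  - exact: (@gen_ideal_nth _ (gens D x y m j) 1%N isT).
  - exact: (@gen_ideal_nth _ (gens D x y m j) 2%N isT).
move=> /hI [l [a [b [ha hb ->]]]].
elim/big_ind: _ => [|z z'|i _]; [exact: T0 | exact: TD | ].
apply: TM => //; exact: BI.
Qed.
End Zero.

Lemma ex_minP (P : nat -> Prop) : (exists k, P k) ->
  exists k, P k /\ forall k', P k' -> (k <= k')%N.
Proof.
move=> [k hk]; elim/ltn_ind: k hk => k IH hk.
case: (classic (exists2 k', P k' & (k' < k)%N)) => [[k' hk' lt]|hn].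
  exact: IH lt hk'.
exists k; split => // k' hk'; rewrite leqNgt; apply/negP => lt; apply: hn; by exists k'.
Qed.

Section MainSec.
Context (n : nat) (D : idomainType).
Implicit Types (p q : {mpoly D[n]}).

Lemma msupp_sum_ex l (F : 'I_l -> {mpoly D[n]}) mu :
  mu \in msupp (\sum_i F i) -> exists i, mu \in msupp (F i).
Proof.
rewrite mcoeff_msupp raddf_sum => h; apply: NNPP => hn; move/eqP: h; apply.
apply: big1 => i _; apply/eqP; rewrite mcoeff_eq0; apply/negP => hi; apply: hn; by exists i.
Qed.

Lemma msuppM_ex p q mu : mu \in msupp (p * q) ->
  exists m1 m2, [/\ m1 \in msupp p, m2 \in msupp q & mu = (m1 + m2)%MM].
Proof.
move/msuppM_le/allpairsP => [[m1 m2] [/= h1 h2 ->]]; by exists m1, m2.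
Qed.

Lemma msupp_ex p : p != 0 -> exists mu, mu \in msupp p.
Proof.
by rewrite -msupp_eq0; case: (msupp p) => [|mu s] //= _; exists mu; rewrite inE eqxx.
Qed.

Lemma mdegXn (i : 'I_n) k : mdeg (U_(i) *+ k)%MM = k.
Proof. by rewrite mdegMn mdeg1 mul1n. Qed.

Lemma pihomog_Xn (i : 'I_n) k : pihomog mdeg k ('X_i ^+ k : {mpoly D[n]}) = 'X_i ^+ k.
Proof. by rewrite mpolyXn pihomogX (_ : (_ == k) = true) //; apply/eqP; apply: mdegXn. Qed.

End MainSec.

Section Factor.
Context (n : nat) (D : idomainType) (x y : 'I_n) (m j : nat).
Hypothesis xy : x != y.
Hypothesis hm : (2 <= m)%N.
Hypothesis j1 : (1 <= j)%N.
Hypothesis jm1 : (j <= m - 1)%N.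
Let jm : (j <= m)%N. Proof. lia. Qed.

Local Notation I := (gen_ideal (gens D x y m j)).

Lemma I_Xm : I ('X_x ^+ m). Proof. exact: (@gen_ideal_nth _ (gens D x y m j) 0%N isT). Qed.
Lemma I_Ym : I ('X_y ^+ m). Proof. exact: (@gen_ideal_nth _ (gens D x y m j) 2%N isT). Qed.

Lemma I_Smon f : I f -> forall mu, mu \in msupp f -> Smon x y m j mu.
Proof. by move/(memI m j xy). Qed.

Lemma factor (A B : subsetR {mpoly D[n]}) :
  nonzero_ideal A -> nonzero_ideal B -> ideal_eq I (ideal_mul A B) -> m <> (2 * j)%N ->
  ideal_eq A (@unit_ideal _) \/ ideal_eq B (@unit_ideal _).
Proof.
move=> [hA [fA [hfA fAn]]] [hB [fB [hfB fBn]]] hI hneq.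
pose PA' := fun k => exists2 f, A f & exists2 mu, mu \in msupp f & mdeg mu = k.
pose PB' := fun k => exists2 f, B f & exists2 mu, mu \in msupp f & mdeg mu = k.
have [a [[fa hfa [mua hmua ea]] amin]] : exists k, PA' k /\ forall k', PA' k' -> (k <= k')%N.
  apply: ex_minP; have [mu hmu] := msupp_ex fAn; exists (mdeg mu), fA => //; by exists mu.
have [b [[fb hfb [mub hmub eb]] bmin]] : exists k, PB' k /\ forall k', PB' k' -> (k <= k')%N.
  apply: ex_minP; have [mu hmu] := msupp_ex fBn; exists (mdeg mu), fB => //; by exists mu.
have ordA : forall f, A f -> forall mu, mu \in msupp f -> (a <= mdeg mu)%N.
  move=> f hf mu hmu; apply: amin; exists f => //; by exists mu.
have ordB : forall f, B f -> forall mu, mu \in msupp f -> (b <= mdeg mu)%N.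
  move=> f hf mu hmu; apply: bmin; exists f => //; by exists mu.
have ABI : forall f g, A f -> B g -> I (f * g).
  by move=> f g hf hg; apply/hI; apply: ideal_mul_prod.
have piM : forall f g, A f -> B g ->
    pihomog mdeg (a + b) (f * g) = pihomog mdeg a f * pihomog mdeg b g.
  move=> f g hf hg; apply: pihomogM_gen => m1 m2 h1 h2 e.
  have h3 := ordA _ hf _ h1; have h4 := ordB _ hg _ h2.
  have e1 : (mdeg m1 + mdeg m2 = a + b)%N := e.
  change (mdeg m1 = a /\ mdeg m2 = b); lia.
have ab_le : (a + b <= m)%N.
  have := I_Xm; move/hI => [l [as_ [bs [has hbs e]]]].
  have : (U_(x) *+ m)%MM \in msupp ('X_x ^+ m : {mpoly D[n]}).
    by rewrite mpolyXn msuppX inE.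
  rewrite e => /msupp_sum_ex [i /msuppM_ex [m1 [m2 [h1 h2 e2]]]].
  have := ordA _ (has i) _ h1; have := ordB _ (hbs i) _ h2.
  have := @mdegXn n x m; rewrite e2 mdegD; lia.
have ab_ge : (m <= a + b)%N.
  have hpa : pihomog mdeg a fa != 0 by apply: (pihomog_neq0 hmua).
  have hpb : pihomog mdeg b fb != 0 by apply: (pihomog_neq0 hmub).
  have := mulf_neq0 hpa hpb; rewrite -piM // => /pihomog_neq0P [mu hmu emu].
  have emu' : mdeg mu = (a + b)%N := emu.
  rewrite -emu'; apply: (Smon_deg xy jm); exact: I_Smon (ABI _ _ hfa hfb) _ hmu.
have eab : (a + b)%N = m by apply/eqP; rewrite eqn_leq ab_le ab_ge.
have [a0|an0] := eqVneq a 0%N.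
  left; apply: (zero_case xy jm j1 hA hB hI); exists fa => //.
  rewrite -mcoeff_msupp; move: ea; rewrite a0 => /eqP; rewrite mdeg_eq0 => /eqP <-//.
have [b0|bn0] := eqVneq b 0%N.
  right; apply: (zero_case xy jm j1 hB hA); last first.
    exists fb => //; rewrite -mcoeff_msupp; move: eb; rewrite b0 => /eqP.
    by rewrite mdeg_eq0 => /eqP <-.
  move=> z; rewrite hI; exact: ideal_mulC.
exfalso; apply: hneq.
have a1 : (1 <= a)%N by rewrite lt0n.
have b1 : (1 <= b)%N by rewrite lt0n.
pose PA := fun F => exists2 f, A f & F = pihomog mdeg a f.
pose PB := fun G => exists2 g, B g & G = pihomog mdeg b g.
have lin : forall (C : subsetR {mpoly D[n]}) d, is_ideal C ->
    forall F F0 (c e : D), (exists2 f, C f & F = pihomog mdeg d f) ->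
    (exists2 f, C f & F0 = pihomog mdeg d f) ->
    exists2 f, C f & c *: F - e *: F0 = pihomog mdeg d f.
  move=> C d hC F F0 c e [f hf ->] [f0 hf0 ->].
  exists (c%:MP * f - e%:MP * f0).
    have [_ _ hM] := hC; apply: ideal_sub => //; exact: hM.
  by rewrite linearB !mul_mpolyC !linearZ.
have hhom : forall (C : subsetR {mpoly D[n]}) d F, (exists2 f, C f & F = pihomog mdeg d f) ->
    forall mu, mu \in msupp F -> mdeg mu = d.
  by move=> C d F [f _ ->] mu /pihomog_supp [].
have prodAB : forall F G, PA F -> PB G -> forall mu, mu \in msupp (F * G) ->
    mdeg mu = m /\ Smon x y m j mu.
  move=> F G [f hf ->] [g hg ->] mu; rewrite -piM // => /pihomog_supp [e hmu].
  split; first by rewrite -eab; exact: e.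
  exact: I_Smon (ABI _ _ hf hg) _ hmu.
have decAB : forall Z, I Z -> pihomog mdeg m Z = Z -> decomp PA PB Z /\ decomp PB PA Z.
  move=> Z hZ hZh; move/hI: hZ => [l [as_ [bs [has hbs e]]]].
  have eZ : Z = \sum_(i < l) pihomog mdeg a (as_ i) * pihomog mdeg b (bs i).
    rewrite -{1}hZh e linear_sum; apply: eq_bigr => i _; rewrite -eab; exact: piM.
  split.
    exists l, (fun i => pihomog mdeg a (as_ i)), (fun i => pihomog mdeg b (bs i)).
    by split => // i; [exists (as_ i) | exists (bs i)].
  exists l, (fun i => pihomog mdeg b (bs i)), (fun i => pihomog mdeg a (as_ i)).
  split => //; first by move=> i; exists (bs i).
    by move=> i; exists (as_ i).
  by rewrite eZ; apply: eq_bigr => i _; rewrite mulrC.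
have [dXab dXba] := decAB _ I_Xm (pihomog_Xn _ _ _).
have [dYab dYba] := decAB _ I_Ym (pihomog_Xn _ _ _).
have XmN : 'X_x ^+ m != 0 :> {mpoly D[n]} by rewrite mpolyXn -msupp_eq0 msuppX.
have YmN : 'X_y ^+ m != 0 :> {mpoly D[n]} by rewrite mpolyXn -msupp_eq0 msuppX.
have Ym0 : forall mu, mu \in msupp ('X_y ^+ m : {mpoly D[n]}) -> mu x = 0%N.
  by move=> mu; rewrite mpolyXn msuppX inE => /eqP ->; rewrite mulmn1E yxF.
have Xm0 : forall mu, mu \in msupp ('X_x ^+ m : {mpoly D[n]}) -> mu y = 0%N.
  by move=> mu; rewrite mpolyXn msuppX inE => /eqP ->; rewrite mulmn1E xyF.
have prodBA : forall G F, PB G -> PA F -> forall mu, mu \in msupp (G * F) ->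
    mdeg mu = m /\ Smon x y m j mu.
  by move=> G F hG hF mu; rewrite mulrC; apply: prodAB.
have hAh := hhom A a; have hBh := hhom B b.
have linA : forall F F0 (c e : D), PA F -> PA F0 -> PA (c *: F - e *: F0) by apply: lin.
have linB : forall F F0 (c e : D), PB F -> PB F0 -> PB (c *: F - e *: F0) by apply: lin.
have c1 : (b <= m - j)%N.
  apply: (@core n D x a b (m - j) PA PB a1 b1 linA hAh hBh).
  - move=> F G hF hG mu hmu; have [e hS] := prodAB F G hF hG mu hmu.
    by rewrite eab; apply: (Smon_degm_x xy jm hS e).
  - by rewrite eab.
  - by exists ('X_y ^+ m).
have c2 : (b <= j)%N.
  apply: (@core n D y a b j PA PB a1 b1 linA hAh hBh).
  - move=> F G hF hG mu hmu; have [e hS] := prodAB F G hF hG mu hmu.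
    by rewrite eab; apply: (Smon_degm_y xy jm hS e).
  - by rewrite eab.
  - by exists ('X_x ^+ m).
have c3 : (a <= m - j)%N.
  apply: (@core n D x b a (m - j) PB PA b1 a1 linB hBh hAh).
  - move=> F G hF hG mu hmu; have [e hS] := prodBA F G hF hG mu hmu.
    by rewrite addnC eab; apply: (Smon_degm_x xy jm hS e).
  - by rewrite addnC eab.
  - by exists ('X_y ^+ m).
have c4 : (a <= j)%N.
  apply: (@core n D y b a j PB PA b1 a1 linB hBh hAh).
  - move=> F G hF hG mu hmu; have [e hS] := prodBA F G hF hG mu hmu.
    by rewrite addnC eab; apply: (Smon_degm_y xy jm hS e).
  - by rewrite addnC eab.
  - by exists ('X_x ^+ m).
lia.
Qed.
End Factor.

Section Square.
Context (n : nat) (D : idomainType) (x y : 'I_n) (j : nat).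
Hypothesis xy : x != y.
Hypothesis j1 : (1 <= j)%N.

Local Notation J := (gen_ideal [:: 'X_x ^+ j; 'X_y ^+ j] : subsetR {mpoly D[n]}).

Lemma coef0_mulX (c : {mpoly D[n]}) nu : nu != 0%MM -> (c * 'X_[nu])@_0%MM = 0.
Proof.
move=> nun; apply: memN_msupp_eq0; apply/negP => /msuppMX_le /mnm_lepP h.
move/eqP: nun; apply; apply/mnmP => i; have := h i; rewrite mnm0E; lia.
Qed.

Lemma J_not1 : ~ J 1.
Proof.
move=> [c]; rewrite !big_ord_recl big_ord0 addr0 /= !mpolyXn => /(congr1 (mcoeff 0%MM)).
rewrite mcoeffD !coef0_mulX ?addr0 ?mcoeff1 ?eqxx; first by move/eqP; rewrite oner_eq0.
- apply/eqP => /mnmP /(_ y); rewrite mulmn1E eqxx mnm0E; lia.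
- apply/eqP => /mnmP /(_ x); rewrite mulmn1E eqxx mnm0E; lia.
Qed.

Lemma J_nonzero : nonzero_ideal J.
Proof.
split; first exact: gen_ideal_is_ideal.
exists ('X_x ^+ j); split; first exact: (@gen_ideal_nth _ [:: 'X_x ^+ j; 'X_y ^+ j] 0%N isT).
by rewrite mpolyXn -msupp_eq0 msuppX.
Qed.

Lemma I_square : ideal_eq (gen_ideal (gens D x y (j + j) j)) (ideal_mul J J).
Proof.
have hJ := gen_ideal_is_ideal [:: 'X_x ^+ j; 'X_y ^+ j : {mpoly D[n]}].
have [_ _ hJM] := hJ.
have JX : J ('X_x ^+ j) by exact: (@gen_ideal_nth _ [:: 'X_x ^+ j; 'X_y ^+ j] 0%N isT).
have JY : J ('X_y ^+ j) by exact: (@gen_ideal_nth _ [:: 'X_x ^+ j; 'X_y ^+ j] 1%N isT).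
move=> f; split.
- move=> [c ->]; rewrite !big_ord_recl big_ord0 addr0 /= addnK.
  exists 3%N, (fun i : 'I_3 => [:: c ord0 * 'X_x ^+ j; c (lift ord0 ord0) * 'X_x ^+ j;
                  c (lift ord0 (lift ord0 ord0)) * 'X_y ^+ j]`_i),
    (fun i : 'I_3 => [:: 'X_x ^+ j; 'X_y ^+ j; 'X_y ^+ j]`_i).
  split.
  + by case=> [[|[|[|]]]] //= _; apply: hJM.
  + by case=> [[|[|[|]]]] //= _.
  + rewrite !big_ord_recl big_ord0 addr0 /= !exprD; ring.
- move=> [l [a [b [ha hb ->]]]].
  apply: ideal_sum; first exact: gen_ideal_is_ideal.
  move=> i _; have [c ec] := ha i; have [d ed] := hb i.
  rewrite ec ed !big_ord_recl !big_ord0 !addr0 /=.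
  exists (fun k : 'I_3 => [:: c ord0 * d ord0; c ord0 * d (lift ord0 ord0) + c (lift ord0 ord0) * d ord0;
       c (lift ord0 ord0) * d (lift ord0 ord0)]`_k).
  rewrite !big_ord_recl big_ord0 addr0 /= addnK !exprD; ring.
Qed.
End Square.


Unset Implicit Arguments.

Theorem corollary3p4 (D : idomainType) (N : nat) (hN : (1 < N)%N) (m j : nat) :
  ideal_monoid_BF {mpoly D[N]} ->
  (2 <= m)%N -> (1 <= j <= m - 1)%N ->
  (ideal_atom
     (@gen_ideal {mpoly D[N]} [:: 'X_(var1 hN) ^+ m;
               'X_(var1 hN) ^+ (m - j) * 'X_(var2 hN) ^+ j;
               'X_(var2 hN) ^+ m])
   <-> m <> (2 * j)%N).
Proof.
move=> _ hm /andP [j1 jm1].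
set x := var1 hN; set y := var2 hN.
have xy : x != y by rewrite -val_eqE.
change (ideal_atom (gen_ideal (gens D x y m j)) <-> m <> (2 * j)%N).
split.
- move=> [_ _ hat] e.
  have := hat _ _ (J_nonzero D x y j) (J_nonzero D x y j).
  rewrite e mul2n -addnn => /(_ (I_square x y j)) [] /(_ 1) [_ h];
    by apply: (J_not1 xy j1); apply: h.
- move=> hneq; split.
  + split; first exact: gen_ideal_is_ideal.
    exists ('X_x ^+ m); split; first exact: I_Xm.
    by rewrite mpolyXn -msupp_eq0 msuppX.
  + move=> /(_ 1) [_ /(_ I)] /(memI m j xy) /(_ 0%MM).
    rewrite msupp1 inE eqxx => /(_ isT); rewrite /Smon !mnm0E; lia.
  + move=> A B hA hB hI; exact: (factor xy hm j1 jm1 hA hB hI hneq).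
Qed.
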